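(* Let $1<\beta<2$ and let $r^{(\beta)}_k$ ($k\in\mathbb{Z}$) be as defined in the context. Then $$\sum_{k=0}^{m}r^{(\beta)}_{j-k}>0\quad\text{for all } m\ge2,\ 1\le j\le m-1,$$ and $$\sum_{k=1-m}^{m-1}r^{(\beta)}_{k}>\frac{c^{(\beta)}_{\ast}}{m^{\beta}}>0\quad\text{for all } m\ge2,$$ where $c^{(\beta)}_{\ast}=\frac{(1-\beta)(2-\beta)(3-\beta)4^{\beta}e^{-9/4}\Psi_\beta}{3}$ and $\Psi_\beta=\frac{1}{2\cos(\pi\beta/2)}$.
   Context: Let $g^{(\beta)}_k=(-1)^k\binom{\beta}{k}$ for $k\ge0$ (equivalently $g^{(\beta)}_0=1$, $g^{(\beta)}_k=(1-\frac{\beta+1}{k})g^{(\beta)}_{k-1}$). Let $\Psi_\beta=\frac{1}{2\cos(\pi\beta/2)}$ and define $r^{(\beta)}_0=2\Psi_\beta\big(\frac{\beta}{2}g^{(\beta)}_1+\frac{2-\beta}{2}g^{(\beta)}_0\big)$, $r^{(\beta)}_1=\Psi_\beta\big(\frac{\beta}{2}g^{(\beta)}_0+\frac{2-\beta}{2}g^{(\beta)}_1+\frac{\beta}{2}g^{(\beta)}_2\big)$, $r^{(\beta)}_k=\Psi_\beta\big(\frac{\beta}{2}g^{(\beta)}_{k+1}+\frac{2-\beta}{2}g^{(\beta)}_k\big)$ for $k\ge2$, and $r^{(\beta)}_{-k}=r^{(\beta)}_k$ for $k\ge1$. *)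

(* Defs.v *)
From Stdlib Require Import Reals Lra Lia ZArith.
Open Scope R_scope.

(* g^(beta)_k = (-1)^k binom(beta,k), via the recurrence
   g_0 = 1, g_k = (1 - (beta+1)/k) g_{k-1}. *)
Fixpoint gcoef (beta : R) (k : nat) : R :=
  match k with
  | O => 1
  | S k' => (1 - (beta + 1) / INR (S k')) * gcoef beta k'
  end.

Definition Psi (beta : R) : R := 1 / (2 * cos (PI * beta / 2)).

Definition rnat (beta : R) (k : nat) : R :=
  match k with
  | O => 2 * Psi beta * (beta / 2 * gcoef beta 1 + (2 - beta) / 2 * gcoef beta 0)
  | 1%nat => Psi beta * (beta / 2 * gcoef beta 0 + (2 - beta) / 2 * gcoef beta 1
                          + beta / 2 * gcoef beta 2)
  | _ => Psi beta * (beta / 2 * gcoef beta (S k) + (2 - beta) / 2 * gcoef beta k)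
  end.

Definition r (beta : R) (k : Z) : R := rnat beta (Z.abs_nat k).

Definition zsum (a b : Z) (f : Z -> R) : R :=
  match (b - a)%Z with
  | Zneg _ => 0
  | d => sum_f_R0 (fun i => f (a + Z.of_nat i)%Z) (Z.to_nat d)
  end.

Definition cstar (beta : R) : R :=
  (1 - beta) * (2 - beta) * (3 - beta) * Rpower 4 beta * exp (- (9 / 4)) * Psi beta / 3.

(* Main.v *)
Require Import Defs.
From Stdlib Require Import Reals ZArith Lra Lia.
Open Scope R_scope.

Definition Ss (beta : R) (n : nat) : R := sum_f_R0 (gcoef beta) n.

Lemma S_g beta : forall n, beta * Ss beta n = (beta - INR n) * gcoef beta n.
Proof.
  induction n as [|n IH].
  - unfold Ss; simpl; ring.
  - unfold Ss in *. change (sum_f_R0 (gcoef beta) (S n)) with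
      (sum_f_R0 (gcoef beta) n + gcoef beta (S n)).
    change (gcoef beta (S n)) with ((1 - (beta + 1) / INR (S n)) * gcoef beta n).
    rewrite Rmult_plus_distr_l, IH, S_INR.
    assert (0 <= INR n) by apply pos_INR.
    field. lra.
Qed.

Lemma S_rec beta : beta <> 0 -> forall n,
  Ss beta (S n) = Ss beta n * (INR n + 1 - beta) / (INR n + 1).
Proof.
  intros hb n.
  assert (0 <= INR n) by apply pos_INR.
  apply Rmult_eq_reg_l with beta; auto.
  rewrite S_g.
  replace (beta * (Ss beta n * (INR n + 1 - beta) / (INR n + 1)))
    with ((beta * Ss beta n) * (INR n + 1 - beta) / (INR n + 1)) by (field; lra).
  rewrite S_g.
  change (gcoef beta (S n)) with ((1 - (beta + 1) / INR (S n)) * gcoef beta n).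
  rewrite S_INR. field. lra.
Qed.

Lemma sumS f n : sum_f_R0 f (S n) = sum_f_R0 f n + f (S n).
Proof. reflexivity. Qed.

Definition Rs (beta : R) (n : nat) : R := sum_f_R0 (rnat beta) n.

Lemma R_formula beta : forall n, (1 <= n)%nat ->
  Rs beta n = rnat beta 0 / 2 + Psi beta * (beta/2 * Ss beta (S n) + (2 - beta)/2 * Ss beta n).
Proof.
  intros n hn. induction n as [|n IH]; [lia|].
  destruct n as [|n].
  - unfold Rs, Ss. simpl. field.
  - specialize (IH ltac:(lia)). unfold Rs, Ss in *.
    rewrite (sumS (rnat beta) (S n)), IH, (sumS (gcoef beta) (S (S n))).
    change (rnat beta (S (S n))) with (Psi beta * (beta / 2 * gcoef beta (S (S (S n))) + (2 - beta) / 2 * gcoef beta (S (S n)))).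
    rewrite (sumS (gcoef beta) (S n)). ring.
Qed.

Lemma rev_sum : forall j f, sum_f_R0 (fun i => f (j - i)%nat) j = sum_f_R0 f j.
Proof.
  induction j as [|j IH]; intros f.
  - reflexivity.
  - rewrite sumS. replace (S j - S j)%nat with 0%nat by lia.
    rewrite (sum_eq (fun i => f (S j - i)%nat) (fun i => (fun k => f (S k)) (j - i)%nat)).
    2:{ intros i hi. cbv beta. f_equal. lia. }
    rewrite (IH (fun k => f (S k))). rewrite (decomp_sum f (S j)) by lia. simpl pred. ring.
Qed.

Lemma split_sum f j : forall d,
  sum_f_R0 (fun i => f (if (i <=? j)%nat then (j - i)%nat else (i - j)%nat)) (j + d)
  = sum_f_R0 f j + sum_f_R0 f d - f 0%nat.
Proof.
  induction d as [|d IH].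
  - rewrite Nat.add_0_r.
    rewrite (sum_eq _ (fun i => f (j - i)%nat)).
    2:{ intros i hi. destruct (Nat.leb_spec i j); [reflexivity| lia]. }
    rewrite rev_sum. simpl. ring.
  - replace (j + S d)%nat with (S (j + d)) by lia.
    rewrite sumS, IH, (sumS f d).
    destruct (Nat.leb_spec (S (j + d)) j); [lia|].
    replace (S (j + d) - j)%nat with (S d) by lia. ring.
Qed.

Lemma zsum_eq a b f : (a <= b)%Z ->
  zsum a b f = sum_f_R0 (fun i => f (a + Z.of_nat i)%Z) (Z.to_nat (b - a)).
Proof.
  intros h. unfold zsum. destruct (b - a)%Z eqn:E; try lia; reflexivity.
Qed.

Lemma zsum1 beta m j : (j <= m)%nat ->
  zsum 0 (Z.of_nat m) (fun k => r beta (Z.of_nat j - k)%Z)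
  = Rs beta j + Rs beta (m - j) - rnat beta 0.
Proof.
  intros h. rewrite zsum_eq by lia.
  replace (Z.to_nat (Z.of_nat m - 0)) with (j + (m - j))%nat by lia.
  rewrite (sum_eq _ (fun i => rnat beta (if (i <=? j)%nat then (j - i)%nat else (i - j)%nat))).
  - apply split_sum.
  - intros i hi. unfold r. f_equal. destruct (Nat.leb_spec i j); lia.
Qed.

Lemma zsum2 beta m : (1 <= m)%nat ->
  zsum (1 - Z.of_nat m)%Z (Z.of_nat m - 1)%Z (fun k => r beta k)
  = 2 * Rs beta (m - 1) - rnat beta 0.
Proof.
  intros h. rewrite zsum_eq by lia.
  replace (Z.to_nat (Z.of_nat m - 1 - (1 - Z.of_nat m))) with ((m - 1) + (m - 1))%nat by lia.
  rewrite (sum_eq _ (fun i => rnat beta (if (i <=? (m-1))%nat then ((m-1) - i)%nat else (i - (m-1))%nat))).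
  - rewrite split_sum. unfold Rs. ring.
  - intros i hi. unfold r. f_equal. destruct (Nat.leb_spec i (m-1)); lia.
Qed.

Lemma Psi_neg beta : 1 < beta -> beta < 2 -> Psi beta < 0.
Proof.
  intros h1 h2. unfold Psi.
  assert (hc : cos (PI * beta / 2) < 0).
  { apply cos_lt_0; assert (PI > 0) by apply PI_RGT_0; nra. }
  unfold Rdiv. rewrite Rmult_1_l. apply Rinv_lt_0_compat. lra.
Qed.

Lemma S1 beta : Ss beta 1 = 1 - beta.
Proof. unfold Ss. simpl. field. Qed.

Lemma S_neg beta : 1 < beta -> beta < 2 -> forall n, Ss beta (S n) < 0.
Proof.
  intros h1 h2. induction n as [|n IH].
  - rewrite S1. lra.
  - rewrite S_rec by lra. rewrite S_INR.
    assert (0 <= INR n) by apply pos_INR.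
    unfold Rdiv. rewrite Rmult_assoc.
    apply Rmult_neg_pos; auto.
    apply Rmult_gt_0_compat; [lra|]. apply Rinv_0_lt_compat; lra.
Qed.

Lemma S_mono beta : 1 < beta -> beta < 2 -> forall n,
  Ss beta (S n) <= Ss beta (S (S n)).
Proof.
  intros h1 h2 n. rewrite (S_rec beta ltac:(lra) (S n)). rewrite S_INR.
  assert (0 <= INR n) by apply pos_INR.
  assert (hs := S_neg beta h1 h2 n).
  set (s := Ss beta (S n)).
  replace (s * (INR n + 1 + 1 - beta) / (INR n + 1 + 1)) with (s - s * ((beta) / (INR n + 1 + 1))) by (field; lra).
  assert (0 < beta / (INR n + 1 + 1)) by (apply Rdiv_lt_0_compat; lra).
  assert (s * (beta / (INR n + 1 + 1)) < 0) by (apply Rmult_neg_pos; auto). lra.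
Qed.

Lemma T_pos beta : 1 < beta -> beta < 2 -> forall n, (1 <= n)%nat ->
  Rs beta n - rnat beta 0 / 2 > 0.
Proof.
  intros h1 h2 n hn. rewrite R_formula by auto.
  destruct n as [|n]; [lia|].
  assert (a := S_neg beta h1 h2 n). assert (b := S_neg beta h1 h2 (S n)).
  assert (p := Psi_neg beta h1 h2).
  assert (hx : beta / 2 * Ss beta (S (S n)) + (2 - beta) / 2 * Ss beta (S n) < 0) by nra.
  assert (h := Rmult_lt_0_compat _ _ (Ropp_0_gt_lt_contravar _ p) (Ropp_0_gt_lt_contravar _ hx)).
  lra.
Qed.

Lemma ln_lb x : 0 < x -> 1 - / x <= ln x.
Proof.
  intros hx. assert (h := exp_ineq1_le (ln (/ x))).
  rewrite exp_ln in h by (apply Rinv_0_lt_compat; auto).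
  rewrite ln_Rinv in h by auto. lra.
Qed.

Lemma rat_ineq beta M : 1 < beta -> beta < 2 -> 0 <= M ->
  (1 - / ((M + 3 - beta) / (M + 2))) + (beta - 1) * (1 - / ((M + 3) / (M + 2)))
  >= 1 / (M + 3) - 1 / (M + 1).
Proof.
  intros h1 h2 hM.
  apply Rle_ge, Rminus_le. 
  assert (E : 1 / (M + 3) - 1 / (M + 1) - ((1 - / ((M + 3 - beta) / (M + 2))) + (beta - 1) * (1 - / ((M + 3) / (M + 2))))
     = - ((2 * (M + 3 - beta) - (beta - 1) * beta * (M + 1)) * / ((M + 3) * (M + 1) * (M + 3 - beta)))).
  { field. repeat split; lra. }
  rewrite E. apply Ropp_le_cancel. rewrite Ropp_involutive, Ropp_0.
  apply Rmult_le_pos.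
  - assert ((beta - 1) * beta <= 2) by nra.
    assert (0 <= (beta - 1) * beta) by nra.
    assert ((beta - 1) * beta * (M + 1) <= 2 * (M + 1)) by nra.
    nra.
  - left. apply Rinv_0_lt_compat. 
    apply Rmult_lt_0_compat; [apply Rmult_lt_0_compat|]; lra.
Qed.

Lemma main_ln beta : 1 < beta -> beta < 2 -> forall n,
  ln (- Ss beta (S (S n))) + beta * ln (INR n + 2)
  >= ln (- Ss beta 2) + beta * ln 2 - 3/2 + 1 / (INR n + 1) + 1 / (INR n + 2).
Proof.
  intros h1 h2. induction n as [|n IH].
  - simpl INR. replace (0 + 2) with 2 by ring. replace (1 / (0 + 1)) with 1 by field. replace (1 / 2) with (/2) by field. lra.
  - rewrite S_INR.
    set (M := INR n). assert (hM : 0 <= M) by apply pos_INR.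
    assert (hs := S_neg beta h1 h2 (S n)).
    set (s := Ss beta (S (S n))) in *.
    set (u := (M + 3 - beta) / (M + 3)).
    set (v := (M + 3) / (M + 2)).
    assert (hu : 0 < u) by (apply Rdiv_lt_0_compat; lra).
    assert (hv : 0 < v) by (apply Rdiv_lt_0_compat; lra).
    assert (E1 : - Ss beta (S (S (S n))) = (- s) * u).
    { rewrite (S_rec beta ltac:(lra) (S (S n))). fold s. rewrite !S_INR. fold M. unfold u. field. lra. }
    rewrite E1, ln_mult by lra.
    assert (E2 : ln (M + 1 + 2) = ln (M + 2) + ln v).
    { rewrite <- ln_mult by lra. f_equal. unfold v; field; lra. }
    rewrite E2.
    assert (E3 : ln (u * v) = ln u + ln v) by (apply ln_mult; auto).
    assert (B1 := ln_lb (u * v) ltac:(apply Rmult_lt_0_compat; auto)).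
    assert (B2 := ln_lb v hv).
    assert (B3 : (beta - 1) * (1 - / v) <= (beta - 1) * ln v) by (apply Rmult_le_compat_l; lra).
    assert (B4 := rat_ineq beta M h1 h2 hM).
    replace ((M + 3 - beta) / (M + 2)) with (u * v) in B4 by (unfold u, v; field; lra).
    fold v in B4.
    replace (M + 1 + 1) with (M + 2) by ring.
    replace (M + 1 + 2) with (M + 3) by ring.
    fold M in IH. lra.
Qed.

Lemma ln2_lt_1 : ln 2 < 1.
Proof.
  rewrite <- ln_exp. apply ln_increasing; [lra|].
  assert (h := exp_ineq1 1 ltac:(lra)). lra.
Qed.

Lemma exp14 : exp (1/4) <= 3/2.
Proof.
  assert (h : exp 1 = exp (1/4) * exp (1/4) * (exp (1/4) * exp (1/4))).
  { rewrite <- !exp_plus. f_equal. field. }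
  assert (h3 := exp_le_3). assert (hp := exp_pos (1/4)).
  destruct (Rle_lt_dec (exp (1/4)) (3/2)) as [ok|bad]; auto.
  exfalso. assert (exp (1/4) * exp (1/4) > 9/4) by nra. nra.
Qed.

Lemma K_le3 beta : 1 < beta -> beta < 2 ->
  (3 - beta) * exp (beta * ln 2) * exp (- (3/4)) <= 3.
Proof.
  intros h1 h2.
  assert (a := exp_ineq1_le (2 - beta)).
  assert (l := ln2_lt_1).
  assert (b : (3 - beta) * exp (beta * ln 2) * exp (- (3/4)) <= exp (2 - beta) * exp (beta * ln 2) * exp (- (3/4))).
  { apply Rmult_le_compat_r; [left; apply exp_pos|].
    apply Rmult_le_compat_r; [left; apply exp_pos|]. lra. }
  rewrite <- !exp_plus in b.
  assert (c : exp (2 - beta + beta * ln 2 + - (3 / 4)) <= exp (1/4 + ln 2)).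
  { destruct (Req_dec (2 - beta + beta * ln 2 + - (3 / 4)) (1/4 + ln 2)) as [e|ne].
    - rewrite e; lra.
    - left. apply exp_increasing. nra. }
  rewrite (exp_plus (1/4) (ln 2)), exp_ln in c by lra.
  assert (d := exp14). lra.
Qed.

Lemma S2 beta : beta <> 0 -> Ss beta 2 = (1 - beta) * (2 - beta) / 2.
Proof.
  intros hb. rewrite (S_rec beta hb 1), S1. simpl INR. field.
Qed.

Lemma const_ineq beta : 1 < beta -> beta < 2 ->
  (- Ss beta 2) * exp (beta * ln 2) * exp (- (3/2)) >=
  (beta - 1) * (2 - beta) * (3 - beta) * exp (beta * ln 4) * exp (- (9/4)) / 6.
Proof.
  intros h1 h2. rewrite S2 by lra.
  assert (E4 : exp (beta * ln 4) = exp (beta * ln 2) * exp (beta * ln 2)).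
  { rewrite <- exp_plus. f_equal. replace 4 with (2 * 2) by ring. rewrite ln_mult by lra. ring. }
  assert (E9 : exp (- (9/4)) = exp (- (3/2)) * exp (- (3/4))).
  { rewrite <- exp_plus. f_equal. field. }
  rewrite E4, E9.
  assert (K := K_le3 beta h1 h2).
  set (e := exp (beta * ln 2)) in *.
  set (E := exp (- (3/2))).
  set (F := exp (- (3/4))) in *.
  assert (he : 0 < e) by apply exp_pos.
  assert (hE : 0 < E) by apply exp_pos.
  assert (P : 0 < (beta - 1) * (2 - beta) * e * E / 2).
  { apply Rdiv_lt_0_compat; [|lra]. repeat apply Rmult_lt_0_compat; lra. }
  assert (Ke : (3 - beta) * e * F / 3 <= 1) by lra.
  assert (H : (beta - 1) * (2 - beta) * e * E / 2 * ((3 - beta) * e * F / 3) <= (beta - 1) * (2 - beta) * e * E / 2 * 1).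
  { apply Rmult_le_compat_l; lra. }
  apply Rle_ge. 
  replace ((beta - 1) * (2 - beta) * (3 - beta) * (e * e) * (E * F) / 6) with ((beta - 1) * (2 - beta) * e * E / 2 * ((3 - beta) * e * F / 3)) by field.
  replace (- ((1 - beta) * (2 - beta) / 2) * e * E) with ((beta - 1) * (2 - beta) * e * E / 2 * 1) by field.
  exact H.
Qed.

Theorem lemma2p8 (beta : R) (hb1 : 1 < beta) (hb2 : beta < 2) :
  (forall (m j : nat), (2 <= m)%nat -> (1 <= j)%nat -> (j <= m - 1)%nat ->
     zsum 0 (Z.of_nat m) (fun k => r beta (Z.of_nat j - k)%Z) > 0)
  /\
  (forall m : nat, (2 <= m)%nat ->
     zsum (1 - Z.of_nat m)%Z (Z.of_nat m - 1)%Z (fun k => r beta k)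
       > cstar beta / Rpower (INR m) beta
     /\ cstar beta / Rpower (INR m) beta > 0).
Proof.
  split.
  - intros m j hm hj hjm. rewrite zsum1 by lia.
    assert (a := T_pos beta hb1 hb2 j hj).
    assert (b := T_pos beta hb1 hb2 (m - j) ltac:(lia)).
    lra.
  - intros m hm. destruct m as [|[|n]]; try lia.
    rewrite zsum2 by lia. replace (S (S n) - 1)%nat with (S n) by lia.
    rewrite R_formula by lia.
    assert (hP := Psi_neg beta hb1 hb2).
    assert (s1 := S_neg beta hb1 hb2 n).
    assert (s2 := S_neg beta hb1 hb2 (S n)).
    assert (mono := S_mono beta hb1 hb2 n).
    assert (ML := main_ln beta hb1 hb2 n).
    assert (CI := const_ineq beta hb1 hb2).
    assert (hn : 0 <= INR n) by apply pos_INR.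
    assert (f1 : 0 < 1 / (INR n + 1)) by (apply Rdiv_lt_0_compat; lra).
    assert (f2 : 0 < 1 / (INR n + 2)) by (apply Rdiv_lt_0_compat; lra).
    assert (hS2 : 0 < - Ss beta 2) by (rewrite S2 by lra; nra).
    assert (EX : exp (ln (- Ss beta (S (S n))) + beta * ln (INR n + 2))
               > exp (ln (- Ss beta 2) + beta * ln 2 - 3/2)).
    { apply exp_increasing. lra. }
    rewrite exp_plus, exp_ln in EX by lra.
    unfold Rminus in EX. rewrite !exp_plus, exp_ln in EX by lra.
    replace (INR (S (S n))) with (INR n + 2) by (rewrite !S_INR; ring).
    unfold cstar, Rpower.
    set (p := exp (beta * ln (INR n + 2))) in *.
    assert (hp : 0 < p) by apply exp_pos.
    set (K6 := (beta - 1) * (2 - beta) * (3 - beta) * exp (beta * ln 4) * exp (- (9 / 4)) / 6) in *.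
    assert (hK : 0 < K6).
    { unfold K6. apply Rdiv_lt_0_compat; [|lra].
      repeat apply Rmult_lt_0_compat; try lra; apply exp_pos. }
    assert (Q : - Ss beta (S (S n)) * p > K6) by lra.
    replace ((1 - beta) * (2 - beta) * (3 - beta) * exp (beta * ln 4) * exp (- (9 / 4)) * Psi beta / 3)
      with (2 * (- Psi beta) * K6) by (unfold K6; field).
    set (Ps := Psi beta) in *.
    set (Sm := Ss beta (S (S n))) in *.
    set (Sm1 := Ss beta (S n)) in *.
    split.
    + apply Rlt_gt. apply Rmult_lt_reg_r with p; auto.
      replace (2 * - Ps * K6 / p * p) with (2 * - Ps * K6) by (field; lra).
      assert (A1 : beta / 2 * Sm + (2 - beta) / 2 * Sm1 <= Sm) by nra.
      assert (A2 : 2 * Ps * Sm <= 2 * Ps * (beta / 2 * Sm + (2 - beta) / 2 * Sm1)) by nra.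
      assert (A3 : 2 * (- Ps) * K6 < 2 * (- Ps) * (- Sm * p)) by (apply Rmult_lt_compat_l; lra).
      assert (A4 : 2 * Ps * Sm * p <= 2 * Ps * (beta / 2 * Sm + (2 - beta) / 2 * Sm1) * p)
        by (apply Rmult_le_compat_r; lra).
      nra.
    + apply Rlt_gt. apply Rdiv_lt_0_compat; auto.
      assert (0 < - Ps) by lra. nra.
Qed.
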